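(* Let $0<p<1$ and flip a coin showing heads (H) with probability $p$ and tails (T) with probability $1-p$ independently until a prescribed string $S$ first appears as consecutive flips; let $Y$ be the number of flips. Then for every integer $n\ge1$: if $S=\mathrm{H}^k$ with $k\ge1$, \[ E(Y^n) = \sum_{\pi\in\Pi_n} (-1)^{n-|\pi|} |\pi|! \prod_{B\in \pi} \sum_{i=1}^k \frac{i^{|B|} - (i-1)^{|B|}}{p^i}; \] if $S=\mathrm{H}^k\mathrm{T}^\ell$ with $k,\ell\ge1$, \[ E(Y^n) = \sum_{\pi\in\Pi_n} (-1)^{n-|\pi|} |\pi|! \prod_{B\in \pi} \frac{(k+\ell)^{|B|}-(k+\ell-1)^{|B|}}{p^k(1-p)^\ell}. \]
   Context: $\Pi_n$ is the set of set partitions of $\{1,\dots,n\}$; $|\pi|$ is the number of blocks of $\pi$ and $|B|$ the size of block $B$. Convention $0^0=1$. *)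

(* Defs.v *)
(* Coin flips: true = heads (H), false = tails (T). *)
From HB Require Import structures.
From mathcomp Require Import all_boot all_order all_algebra.
From mathcomp Require Import all_classical all_reals all_analysis.
Set Implicit Arguments. Unset Strict Implicit. Unset Printing Implicit Defensive.
Import Order.TTheory GRing.Theory Num.Theory.
Local Open Scope ring_scope.

Definition first_occ_at (S w : seq bool) : bool :=
  suffix S w && ~~ infix S (take (size w).-1 w).

Definition word_prob (R : realType) (p : R) (w : seq bool) : R :=
  \prod_(b <- w) (if b then p else 1 - p).

Definition waiting_pmf (R : realType) (p : R) (S : seq bool) (m : nat) : R :=
  \sum_(w : m.-tuple bool | first_occ_at S w) word_prob p w.

Definition moment_partial (R : realType) (p : R) (S : seq bool) (n N : nat) : R :=
  \sum_(m < N) (m%:R ^+ n) * waiting_pmf p S m.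

Definition set_partitions (n : nat) : {set {set {set 'I_n}}} :=
  finset.finset (fun P : {set {set 'I_n}} => finset.partition P (finset.setT : {set 'I_n})).

(* Main.v *)
Set Warnings "-all".
Require Import Defs.
From HB Require Import structures.
From mathcomp Require Import all_boot all_order all_algebra.
From mathcomp Require Import all_classical all_reals all_analysis.
From mathcomp Require Import zify ring lra.
From mathcomp Require Import fintype finset.
Import Order.TTheory GRing.Theory Num.Theory.
Import numFieldNormedType.Exports.
Local Open Scope ring_scope.
Set Implicit Arguments. Unset Strict Implicit. Unset Printing Implicit Defensive.
Section Partitions.
Variable R : realType.

Fixpoint gf (c : nat -> R) (fuel m : nat) {struct fuel} : R :=
  match fuel with
  | 0 => 1
  | fuel'.+1 => match m with
     | 0 => 1
     | m'.+1 => \sum_(j < m'.+1)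
          'C(m'.+1, j.+1)%:R * ((-1) ^+ j * c j.+1) * gf c fuel' (m' - j)
     end
  end.

Lemma gf_fuel c f1 f2 m : (m <= f1)%N -> (m <= f2)%N -> gf c f1 m = gf c f2 m.
Proof.
elim: f1 f2 m => [|f1 IH] [|f2] [|m] //= h1 h2.
apply: eq_bigr => j _; congr (_ * _); apply: IH; lia.
Qed.

Definition gs c m := gf c m m.

Lemma gs0 c : gs c 0 = 1. Proof. by []. Qed.

Lemma gsS c m : gs c m.+1 = \sum_(j < m.+1)
   'C(m.+1, j.+1)%:R * ((-1) ^+ j * c j.+1) * gs c (m - j).
Proof.
rewrite /gs /=; apply: eq_bigr => j _; congr (_ * _); apply: gf_fuel => //.
exact: leq_subr.
Qed.

Definition wt c (j : nat) : R := (-1) ^+ j.-1 * c j.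
Definition PW c n (P : {set {set 'I_n}}) : R :=
  ((#|P|)`!)%:R * \prod_(B in P) wt c #|B|.

Lemma PW_split (c : nat -> R) n (P : {set {set 'I_n}}) (S : {set 'I_n}) :
  finset.partition P S -> S != set0 ->
  PW c P = \sum_(B in P) wt c #|B| * PW c (P :\ B).
Proof.
move=> hP hS.
have P0 : (0 < #|P|)%N.
  rewrite card_gt0; apply: contra hS => /eqP P0.
  by rewrite -(cover_partition hP) P0 /finset.cover big_set0.
have -> : \sum_(B in P) wt c #|B| * PW c (P :\ B) =
          \sum_(B in P) ((#|P|.-1)`!)%:R * \prod_(B in P) wt c #|B|.
  apply: eq_bigr => B BP; rewrite /PW.
  rewrite (finset.cardsD1 B P) BP add1n /=.
  rewrite [in RHS](bigD1 B) //=.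
  rewrite mulrCA; do 2 congr (_ * _).
  by apply: eq_bigl => B'; rewrite in_setD1 andbC.
rewrite sumr_const /PW -mulrnAl -mulrnA mulnC -{1}(prednK P0) factS.
by rewrite prednK.
Qed.

Lemma part_sum (c : nat -> R) n (S : {set 'I_n}) :
  \sum_(P | finset.partition P S) PW c P = gs c #|S|.
Proof.
have [m le] := ubnP #|S|; elim: m S le => // m IH S leS.
have [->|hS] := eqVneq S set0.
  rewrite cards0 (big_pred1 set0) => [|P]; last by rewrite partition_set0.
  by rewrite /PW cards0 big_set0 mulr1.
rewrite (eq_bigr (fun P : {set {set 'I_n}} => \sum_(B in P) wt c #|B| * PW c (P :\ B)));
  last by move=> P hP; apply: PW_split hP hS.
rewrite (exchange_big_dep (fun B : {set 'I_n} => (B != set0) && (B \subset S))) /=; last first.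
  move=> P B hP BP; rewrite (partitionS hP BP) andbT.
  exact: (partition_neq0 hP BP).
have step : forall B : {set 'I_n}, (B != set0) && (B \subset S) ->
    \sum_(P | finset.partition P S && (B \in P)) wt c #|B| * PW c (P :\ B) =
    wt c #|B| * gs c (#|S| - #|B|).
  move=> B /andP[B0 BS].
  rewrite -mulr_sumr; congr (_ * _).
  rewrite (reindex_onto (fun P' => B |: P') (fun P => P :\ B)); last first.
    by move=> P /andP[_ BP]; rewrite finset.setD1K.
  have eqS : #|S :\: B| = (#|S| - #|B|)%N.
    by rewrite cardsD (setIidPr BS).
  rewrite -eqS -IH; last first.
    have hB : (0 < #|B|)%N by rewrite card_gt0.
    have hS' : (0 < #|S|)%N by rewrite card_gt0.
    rewrite eqS; lia.
  apply: eq_big => P'.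
    apply/idP/idP.
      move=> /andP[/andP[hP _] /eqP <-]; exact: partitionD1 hP (setU11 _ _).
    move=> hP'.
    have BP' : B \notin P'.
      apply/negP => BP'; have := partitionS hP' BP'.
      move: B0 => /set0Pn[x xB] /subsetP /(_ x xB); by rewrite inE xB.
    rewrite (setU1K BP') eqxx andbT setU11 andbT.
    have eSB : B :|: (S :\: B) = S.
      apply/setP => x; rewrite !inE; case: (boolP (x \in B)) => xB //=.
      by rewrite (subsetP BS x xB).
    have := partitionU1 hP' B0; rewrite eSB; apply.
    by rewrite -setI_eq0; apply/eqP/setP => x; rewrite !inE; case: (x \in B).
  move=> /andP[_ /eqP ->] //.
rewrite (eq_bigr _ step).
have [s hs] : exists s, #|S| = s.+1.
  by exists #|S|.-1; rewrite prednK // card_gt0.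
rewrite hs gsS.
rewrite (partition_big (fun B : {set 'I_n} => inord (#|B|.-1) : 'I_s.+1) xpredT) //=.
apply: eq_bigr => j _.
rewrite (eq_bigl (fun B : {set 'I_n} => B \in [set B0 : {set 'I_n} | B0 \subset S & #|B0| == j.+1])); last first.
  move=> B; rewrite inE.
  apply/idP/idP.
  - move=> /andP[/andP[B0 BS] /eqP hj]; rewrite BS /=.
    have := subset_leq_card BS; rewrite hs => le.
    have hB : (0 < #|B|)%N by rewrite card_gt0.
    rewrite -hj inordK; by rewrite prednK.
  - move=> /andP[BS /eqP hB]; rewrite BS -card_gt0 hB /=.
    apply/eqP/val_inj; rewrite /= inordK //.
rewrite (eq_bigr (fun _ => (-1)^+j * c j.+1 * gs c (s - j))); last first.
  by move=> B; rewrite inE => /andP[_ /eqP ->]; rewrite /wt subSS.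
by rewrite sumr_const cards_draws hs mulr_natl mulrnAl.
Qed.

End Partitions.

Lemma partsum_gs (R : realType) (c : nat -> R) n :
  \sum_(P in set_partitions n)
     (-1) ^+ (n - #|P|) * (#|P|)`!%:R * \prod_(B in P) c #|B| = gs c n.
Proof.
have := part_sum c [set: 'I_n]; rewrite cardsT card_ord => <-.
apply: eq_big => P; first by rewrite /set_partitions inE.
move=> hP; rewrite /set_partitions inE in hP; rewrite /PW /wt big_split /= prodrXr.
have hsum : (\sum_(B in P) #|B|.-1 + #|P| = #|[set: 'I_n]|)%N.
  rewrite -sum1_card -big_split /= (card_partition hP).
  apply: eq_bigr => B BP; rewrite addn1 prednK // card_gt0.
  exact: partition_neq0 hP BP.
rewrite cardsT card_ord in hsum.
have -> : (\sum_(B in P) #|B|.-1 = n - #|P|)%N by lia.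
by rewrite mulrCA mulrA.
Qed.

Local Open Scope classical_set_scope.
Local Open Scope ring_scope.

Lemma cvg_big_sum (R : realType) (I : eqType) (r : seq I) (f : I -> nat -> R) (l : I -> R) :
  (forall i, i \in r -> f i @ \oo --> l i) ->
  (fun n => \sum_(i <- r) f i n) @ \oo --> \sum_(i <- r) l i.
Proof.
elim: r => [|x r IH] H.
  under eq_fun do rewrite big_nil.
  rewrite big_nil; exact: cvg_cst.
under eq_fun do rewrite big_cons.
rewrite big_cons; apply: cvgD; first by apply: H; rewrite inE eqxx.
by apply: IH => i ir; apply: H; rewrite inE ir orbT.
Qed.

Lemma cvg_cstM (R : realType) (k : R) (f : nat -> R) (l : R) :
  f @ \oo --> l -> (fun n => k * f n) @ \oo --> k * l.
Proof. by move=> H; apply: cvgM => //; exact: cvg_cst. Qed.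

Definition Emom (R : realType) (u : nat -> R) n N :=
  \sum_(0 <= m < N) (m%:R ^+ n) * u m.

Lemma EmomS (R : realType) (u : nat -> R) n N :
  Emom u n N.+1 = Emom u n N + N%:R ^+ n * u N.
Proof. by rewrite /Emom big_nat_recr. Qed.

Lemma Emom0 (R : realType) (u : nat -> R) n : Emom u n 0 = 0.
Proof. by rewrite /Emom big_geq. Qed.

Definition Gs (R : realType) (A : nat -> R) n N :=
  \sum_(0 <= m < N) ((m.+1%:R ^+ n - m%:R ^+ n) * A m).

Lemma GsS (R : realType) (A : nat -> R) n N :
  Gs A n N.+1 = Gs A n N + (N.+1%:R ^+ n - N%:R ^+ n) * A N.
Proof. by rewrite /Gs big_nat_recr. Qed.

Lemma BIN (R : realType) (x : R) (i n : nat) :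
  (x - (i.-1)%:R) ^+ n.+1 - (x - i%:R) ^+ n.+1 =
  \sum_(j < n.+1) 'C(n.+1, j.+1)%:R *
     ((-1) ^+ j * (i%:R ^+ j.+1 - (i.-1)%:R ^+ j.+1)) * x ^+ (n - j).
Proof.
rewrite !exprDn -sumrB big_ord_recl /= !expr0 !mulr1 subrr add0r.
apply: eq_bigr => j _; rewrite /bump /= add1n subSS.
rewrite (exprNn (i.-1)%:R) (exprNn i%:R).
rewrite (exprS (-1) j) -!mulrnAr -mulr_natl; ring.
Qed.

Section Moments.
Variable R : realType.
Variables (u A : nat -> R) (K : nat) (a : nat -> R) (F : nat -> R).
Let c j := \sum_(1 <= i < K.+1) a i * (i%:R ^+ j - (i.-1)%:R ^+ j).
Hypothesis hu0 : forall m, 0 <= u m.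
Hypothesis hA0 : forall m, 0 <= A m.
Hypothesis hA_0 : A 0 = 1.
Hypothesis hAS : forall m, A m = A m.+1 + u m.+1.
Hypothesis huK : forall m, (m < K)%N -> u m = 0.
Hypothesis hK : (0 < K)%N.
Hypothesis hAid : forall m, A m = \sum_(1 <= i < K.+1) a i * u (m + i)%N.
Hypothesis hF0 : F 0 = 1.
Hypothesis hFS : forall n, F n.+1 =
  \sum_(j < n.+1) 'C(n.+1, j.+1)%:R * ((-1) ^+ j * c j.+1) * F (n - j).

Let E n N := \sum_(m < N) (m%:R ^+ n) * u m.

Lemma A_dec m : A m.+1 <= A m.
Proof. by rewrite (hAS m) lerDl. Qed.

Lemma A_cvg0 : A @ \oo --> 0.
Proof.
have nA : nonincreasing_seq A by apply/nonincreasing_seqP => m; exact: A_dec.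
have cA : cvgn A.
  apply: nonincreasing_is_cvgn => //; exists 0 => _ [m _ <-]; exact: hA0.
have Hu : forall i, (0 < i)%N -> (fun m => u (m + i)%N) @ \oo --> 0.
  move=> i i0.
  have -> : (fun m => u (m + i)%N) = (fun m => A (m + i.-1)%N - A (m + i)%N).
    apply: funext => m; rewrite (hAS (m + i.-1)%N) -addnS prednK //.
    by rewrite addrAC subrr add0r.
  rewrite -(subrr (limn A)); apply: cvgB.
    by rewrite (cvg_shiftn i.-1 A); exact: cA.
  by rewrite (cvg_shiftn i A); exact: cA.
have -> : A = (fun m => \sum_(1 <= i < K.+1) a i * u (m + i)%N).
  by apply: funext => m; exact: hAid.
have H0 : \sum_(1 <= i < K.+1) a i * (0 : R) = 0.
  by rewrite big1 // => i _; rewrite mulr0.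
rewrite -[X in _ --> X]H0.
apply: (@cvg_big_sum _ _ _ (fun i m => a i * u (m + i)%N) (fun i => a i * 0)).
move=> i; rewrite mem_index_iota => /andP[i0 _].
by apply: cvg_cstM; apply: Hu.
Qed.


Lemma E0 N : Emom u 0 N.+1 = 1 - A N.
Proof.
elim: N => [|N IH].
  by rewrite EmomS Emom0 add0r expr0 mul1r huK // hA_0 subrr.
by rewrite EmomS IH expr0 mul1r (hAS N) opprD addrA subrK.
Qed.

Lemma Abel n N : Emom u n.+1 N.+1 = Gs A n.+1 N - N%:R ^+ n.+1 * A N.
Proof.
elim: N => [|N IH].
  by rewrite EmomS Emom0 /Gs big_geq // expr0n /= !mul0r subrr add0r.
rewrite EmomS IH GsS (hAS N); ring.
Qed.

Lemma shiftE e i N : (i <= K)%N ->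
  \sum_(0 <= m < N) ((m + i)%:R ^+ e * u (m + i)%N) = Emom u e (N + i).
Proof.
move=> iK; symmetry; rewrite /Emom (big_cat_nat (leq0n i) (leq_addl N i)) /=.
rewrite big1_seq ?add0r; last first.
  move=> m /andP[_]; rewrite mem_index_iota => /andP[_ mi].
  by rewrite huK ?mulr0 //; lia.
rewrite -{1}(add0n i) big_addn addnK.
by [].
Qed.

Lemma Gs_formula n N : Gs A n.+1 N = \sum_(1 <= i < K.+1) a i *
  \sum_(j < n.+1) 'C(n.+1, j.+1)%:R *
     ((-1) ^+ j * (i%:R ^+ j.+1 - (i.-1)%:R ^+ j.+1)) * Emom u (n - j) (N + i).
Proof.
rewrite /Gs.
under eq_bigr do rewrite hAid mulr_sumr.
rewrite exchange_big /=.
apply: eq_big_seq => i; rewrite mem_index_iota => /andP[i0 iK].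
have iK' : (i <= K)%N by rewrite -ltnS.
under [X in _ = a i * X]eq_bigr do rewrite -(shiftE _ _ iK') mulr_sumr.
rewrite exchange_big /= mulr_sumr.
apply: eq_bigr => m _.
have hx1 : (m.+1)%:R = (m + i)%:R - (i.-1)%:R :> R.
  by case: i i0 {iK iK'} => [//|i'] _; rewrite /= addnS -addSn natrD addrK.
have hx0 : m%:R = (m + i)%:R - i%:R :> R by rewrite natrD addrK.
rewrite hx1 hx0 BIN mulr_suml mulr_sumr.
apply: eq_bigr => j _; ring.
Qed.

Lemma mom0 : (fun N => Emom u 0 N) @ \oo --> F 0.
Proof.
rewrite -(cvg_shiftS (fun N => Emom u 0 N)).
have -> : (fun N => Emom u 0 N.+1) = (fun N => 1 - A N).
  by apply: funext => N; rewrite E0.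
rewrite hF0.
suff h : (fun N => 1 - A N) @ \oo --> (1 - 0 : R) by rewrite subr0 in h.
apply: cvgB; [exact: cvg_cst | exact: A_cvg0].
Qed.

Lemma powle (M N n : nat) : (M <= N)%N -> M%:R ^+ n <= N%:R ^+ n :> R.
Proof.
move=> h; case: n => [|n]; first by rewrite !expr0.
by rewrite -!natrX ler_nat leq_exp2r.
Qed.

Lemma mom_step k : (forall k', (k' <= k)%N -> (fun N => Emom u k' N) @ \oo --> F k') ->
  (fun N => Emom u k.+1 N) @ \oo --> F k.+1.
Proof.
move=> IHk.
have HG : (fun N => Gs A k.+1 N) @ \oo --> F k.+1.
  under eq_fun do rewrite Gs_formula.
  have -> : F k.+1 = \sum_(1 <= i < K.+1) a i *
     \sum_(j < k.+1) 'C(k.+1, j.+1)%:R *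
     ((-1) ^+ j * (i%:R ^+ j.+1 - (i.-1)%:R ^+ j.+1)) * F (k - j).
    rewrite hFS.
    under [RHS]eq_bigr do rewrite mulr_sumr.
    rewrite [RHS]exchange_big /=; apply: eq_bigr => j _.
    rewrite /c !mulr_sumr mulr_suml; apply: eq_bigr => i _; ring.
  apply: (@cvg_big_sum _ _ _ (fun i N => a i * \sum_(j < k.+1) 'C(k.+1, j.+1)%:R *
     ((-1) ^+ j * (i%:R ^+ j.+1 - (i.-1)%:R ^+ j.+1)) * Emom u (k - j) (N + i))).
  move=> i _; apply: cvg_cstM.
  apply: (@cvg_big_sum _ _ _ (fun (j : 'I_k.+1) N => 'C(k.+1, j.+1)%:R *
     ((-1) ^+ j * (i%:R ^+ j.+1 - (i.-1)%:R ^+ j.+1)) * Emom u (k - j) (N + i))).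
  move=> j _; apply: cvg_cstM.
  rewrite (cvg_shiftn i (Emom u (k - j))); apply: IHk; exact: leq_subr.
have ndG : {homo (fun N => Gs A k.+1 N) : M N / (M <= N)%N >-> M <= N}.
  apply/nondecreasing_seqP => N; rewrite GsS lerDl.
  apply: mulr_ge0 => //; rewrite subr_ge0; exact: powle.
have Gle : forall N, Gs A k.+1 N <= F k.+1.
  move=> N; apply: (cvgr_to_ge HG); exists N => // N' hN'; exact: ndG.
have Elow : forall M d, Gs A k.+1 M - M%:R ^+ k.+1 * A (M + d)%N <=
                        Emom u k.+1 (M + d).+1.
  move=> M; elim => [|d IHd]; first by rewrite addn0 Abel.
  rewrite addnS EmomS.
  have hp : M%:R ^+ k.+1 * u (M + d).+1 <= (M + d).+1%:R ^+ k.+1 * u (M + d).+1.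
    by apply: ler_wpM2r => //; apply: powle; lia.
  move: IHd; rewrite (hAS (M + d)) => IHd.
  lra.
rewrite -(cvg_shiftS (fun N => Emom u k.+1 N)).
apply/cvgrPdist_le => e e0.
have e20 : 0 < e / 2 by rewrite divr_gt0.
have := (cvgrPdist_le _ _).1 HG _ e20 => -[M _ HM].
have HA : (fun N => M%:R ^+ k.+1 * A N) @ \oo --> 0.
  suff h : (fun N => M%:R ^+ k.+1 * A N) @ \oo --> (M%:R ^+ k.+1 * 0 : R).
    by rewrite mulr0 in h.
  by apply: cvg_cstM; exact: A_cvg0.
have := (cvgrPdist_le _ _).1 HA _ e20 => -[N1 _ HN1].
exists (maxn M N1) => // N /= hN.
have hMN : (M <= N)%N by lia.
have hN1 : (N1 <= N)%N by lia.
have h1 := HM M (ssrnat.leqnn M).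
have h2 := HN1 N hN1.
have h3 := Elow M (N - M)%N; rewrite subnKC // in h3.
have h4 := Gle N.
have h5 := Abel k N.
have h6 := mulr_ge0 (exprn_ge0 k.+1 (ler0n R N)) (hA0 N).
have h7 := mulr_ge0 (exprn_ge0 k.+1 (ler0n R M)) (hA0 N).
rewrite /= sub0r normrN ger0_norm // in h2.
have h8 := ler_norm (F k.+1 - Gs A k.+1 M).
rewrite ger0_norm; last lra.
lra.
Qed.

Lemma moments_cvg n : (fun N => Emom u n N) @ \oo --> F n.
Proof.
elim: n {-2}n (ssrnat.leqnn n) => [|n IH] k hk.
  by move: hk; rewrite leqn0 => /eqP ->; exact: mom0.
case: k hk => [_|k hk]; first exact: mom0.
apply: mom_step => k' hk'; apply: IH; lia.
Qed.

End Moments.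

Lemma sum_tuple0 (R : realType) (T : finType) (G : seq T -> R) :
  \sum_(t : 0.-tuple T) G t = G [::].
Proof. by rewrite (big_pred1 [tuple]) // => t; symmetry; apply/eqP; exact: tuple0. Qed.

Lemma sum_tuple_cons (R : realType) (T : finType) n (G : seq T -> R) :
  \sum_(t : n.+1.-tuple T) G t = \sum_(x : T) \sum_(t : n.-tuple T) G (x :: t).
Proof.
rewrite pair_big /=.
rewrite (reindex (fun p : T * n.-tuple T => [tuple of p.1 :: p.2])) //=.
exists (fun t => (thead t, [tuple of behead t])) => [[x t] _ | t _] /=.
  by rewrite theadE; congr pair; apply: val_inj.
apply: val_inj => /=; case: t => [[|x s] hs] //=.
Qed.

Lemma sum_tuple_cat (R : realType) (T : finType) m L (G : seq T -> R) :
  \sum_(t : (m + L).-tuple T) G t =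
  \sum_(w : m.-tuple T) \sum_(v : L.-tuple T) G (w ++ v).
Proof.
elim: m G => [|m IH] G.
  by rewrite (sum_tuple0 (fun s => \sum_(v : L.-tuple T) G (s ++ v))).
rewrite (sum_tuple_cons (m + L)) (sum_tuple_cons m (fun s => \sum_(v : L.-tuple T) G (s ++ v))).
apply: eq_bigr => x _; exact: (IH (fun s => G (x :: s))).
Qed.

Lemma sum_tuple_rcons (R : realType) (T : finType) m (G : seq T -> R) :
  \sum_(t : m.+1.-tuple T) G t = \sum_(w : m.-tuple T) \sum_(x : T) G (rcons w x).
Proof.
have H : forall n, n = (m + 1)%N -> \sum_(t : n.-tuple T) G t =
    \sum_(w : m.-tuple T) \sum_(x : T) G (rcons w x).
  move=> n ->; rewrite sum_tuple_cat; apply: eq_bigr => w _.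
  rewrite (sum_tuple_cons 0 (fun s => G (w ++ s))); apply: eq_bigr => x _.
  by rewrite (sum_tuple0 (fun s => G (w ++ x :: s))) cats1.
by apply: H; rewrite addn1.
Qed.

Lemma wp_cat (R : realType) (p : R) w v :
  word_prob p (w ++ v) = word_prob p w * word_prob p v.
Proof. by rewrite /word_prob big_cat. Qed.

Lemma wp_rcons (R : realType) (p : R) w b :
  word_prob p (rcons w b) = word_prob p w * (if b then p else 1 - p).
Proof. by rewrite -cats1 wp_cat /word_prob big_seq1. Qed.

Lemma wp_cons (R : realType) (p : R) b w :
  word_prob p (b :: w) = (if b then p else 1 - p) * word_prob p w.
Proof. by rewrite /word_prob big_cons. Qed.

Lemma wp_ge0 (R : realType) (p : R) w : 0 <= p -> p <= 1 -> 0 <= word_prob p w.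
Proof.
move=> p0 p1; rewrite /word_prob; apply: prodr_ge0 => b _.
by case: b => //; rewrite subr_ge0.
Qed.

Lemma sum_wp (R : realType) (p : R) L : \sum_(v : L.-tuple bool) word_prob p v = 1.
Proof.
elim: L => [|L IH]; first by rewrite sum_tuple0 /word_prob big_nil.
rewrite (sum_tuple_cons L (word_prob p)) big_bool /=.
under eq_bigr do rewrite wp_cons.
under [X in _ + X = _]eq_bigr do rewrite wp_cons.
by rewrite -!mulr_sumr IH !mulr1 addrC subrK.
Qed.

Definition Apr (R : realType) (p : R) (S : seq bool) m :=
  \sum_(w : m.-tuple bool | ~~ infix S w) word_prob p w.

Lemma wpmf_small (R : realType) (p : R) S m :
  (m < size S)%N -> waiting_pmf p S m = 0.
Proof.
move=> hm; rewrite /waiting_pmf big1 // => t /andP[/size_suffix].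
by rewrite size_tuple => h _; move: (leq_trans hm h); rewrite ltnn.
Qed.

Lemma Apr0 (R : realType) (p : R) S : S != [::] -> Apr p S 0 = 1.
Proof.
move=> hS; rewrite /Apr big_mkcond.
rewrite (sum_tuple0 (fun s => if ~~ infix S s then word_prob p s else 0)) /=.
by rewrite hS /word_prob big_nil.
Qed.

Lemma first_occ_rcons S w b :
  first_occ_at S (rcons w b) = suffix S (rcons w b) && ~~ infix S w.
Proof.
by rewrite /first_occ_at size_rcons /= -cats1 take_size_cat.
Qed.

Lemma AprS (R : realType) (p : R) S m :
  Apr p S m = Apr p S m.+1 + waiting_pmf p S m.+1.
Proof.
rewrite /Apr /waiting_pmf big_mkcond [X in _ = X + _]big_mkcond [X in _ = _ + X]big_mkcond -big_split /=.
rewrite (sum_tuple_rcons m (fun s => (if ~~ infix S s then word_prob p s else 0) +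
   (if first_occ_at S s then word_prob p s else 0))) /=; apply: eq_bigr => w _.
rewrite big_bool /= !first_occ_rcons !infix_rconsl !wp_rcons.
case: (infix S w); case: (suffix S (rcons w true));
  case: (suffix S (rcons w false)); rewrite /= ?addr0 ?add0r //;
  by rewrite -mulrDr addrC subrK mulr1.
Qed.

Definition run (w : seq bool) := find negb (rev w).

Lemma run_rcons w b : run (rcons w b) = if b then (run w).+1 else 0%N.
Proof. by rewrite /run rev_rcons /=; case: b. Qed.

Lemma nseqS_rcons (T : Type) (x : T) k : nseq k.+1 x = rcons (nseq k x) x.
Proof. by elim: k => //= k ->. Qed.

Lemma suffix_nseq k w : suffix (nseq k true) w = (k <= run w)%N.
Proof.
elim/last_ind: w k => [|w b IH] k.
  by rewrite suffixs0 /run /=; case: k.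
case: k => [|k]; first by rewrite suffix0s.
rewrite nseqS_rcons suffix_rcons run_rcons IH.
by case: b.
Qed.

Lemma run_lt k w : ~~ infix (nseq k true) w -> (run w < k)%N.
Proof.
move=> h; rewrite ltnNge; apply: contra h => h.
by apply: suffixW; rewrite suffix_nseq.
Qed.

Section CaseA.
Variable R : realType.
Variable p : R.
Variable k : nat.
Hypothesis hk : (0 < k)%N.
Let S := nseq k true.

Definition Bm m r := \sum_(w : m.-tuple bool | ~~ infix S w && (run w == r)) word_prob p w.

Lemma FA1 m : waiting_pmf p S m.+1 = p * Bm m (k - 1)%N.
Proof.
rewrite /waiting_pmf /Bm mulr_sumr big_mkcond [RHS]big_mkcond.
rewrite (sum_tuple_rcons m (fun s => if first_occ_at S s then word_prob p s else 0)).
apply: eq_bigr => w _; rewrite big_bool /= !first_occ_rcons !suffix_nseq !run_rcons.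
rewrite !wp_rcons /= leqn0 (negbTE (lt0n_neq0 hk)) /= addr0.
case: (boolP (infix S w)) => hw /=; first by rewrite andbF.
rewrite andbT; have := run_lt hw => hr.
have -> : (k <= (run w).+1)%N = (run w == k - 1)%N by apply/idP/eqP; lia.
by case: (run w == k - 1)%N; rewrite ?mulr0 // mulrC.
Qed.

Lemma FA2 m r : (r.+1 < k)%N -> Bm m.+1 r.+1 = p * Bm m r.
Proof.
move=> hr; rewrite /Bm mulr_sumr big_mkcond [RHS]big_mkcond.
rewrite (sum_tuple_rcons m (fun s => if ~~ infix S s && (run s == r.+1) then word_prob p s else 0)).
apply: eq_bigr => w _; rewrite big_bool /= !infix_rconsl !suffix_nseq !run_rcons.
rewrite !wp_rcons /= andbF addr0 eqSS.
case: (boolP (run w == r)) => h /=; last by rewrite !andbF ?mulr0.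
rewrite (eqP h) (_ : (k <= r.+1)%N = false) /=; last by apply/negbTE; rewrite -ltnNge.
by rewrite !andbT; case: (infix S w); rewrite ?mulr0 //= mulrC.
Qed.

Lemma FA3 m : Apr p S m = \sum_(r < k) Bm m r.
Proof.
rewrite /Apr /Bm big_mkcond.
under [RHS]eq_bigr do rewrite big_mkcond.
rewrite [RHS]exchange_big /=; apply: eq_bigr => w _.
case: (boolP (infix S w)) => hw /=; first by rewrite big1.
have hr := run_lt hw.
rewrite (bigD1 (Ordinal hr)) //= eqxx big1 ?addr0 // => r hr'.
rewrite (_ : (run w == r) = false) //; apply/negbTE; apply: contra hr' => /eqP h.
by apply/eqP/val_inj; rewrite /= h.
Qed.

Lemma FAiter m r j : (r + j < k)%N -> Bm (m + j)%N (r + j)%N = p ^+ j * Bm m r.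
Proof.
elim: j => [|j IH] h; first by rewrite !addn0 expr0 mul1r.
by rewrite !addnS FA2 ?IH ?exprS ?mulrA //; lia.
Qed.

Lemma FAu m i : (0 < i)%N -> (i <= k)%N ->
  waiting_pmf p S (m + i) = p ^+ i * Bm m (k - i)%N.
Proof.
case: i => [//|i] _ hi.
rewrite addnS FA1 (_ : (k - 1 = (k - i.+1) + i)%N); last by lia.
by rewrite FAiter ?exprS ?mulrA //; lia.
Qed.

Lemma FA_id m : p != 0 ->
  Apr p S m = \sum_(1 <= i < k.+1) (p ^+ i)^-1 * waiting_pmf p S (m + i).
Proof.
move=> p0.
transitivity (\sum_(1 <= i < k.+1) Bm m (k - i)%N).
  rewrite FA3 -(big_mkord xpredT (fun r => Bm m r)).
  rewrite big_add1 /= (big_nat_rev _ _ _ _ _ (fun r => Bm m r)) /=.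
  by rewrite add0n.
rewrite big_nat_cond [RHS]big_nat_cond; apply: eq_bigr => i /andP[/andP[i0 ik] _].
rewrite FAu //.
by rewrite mulrA mulVf ?mul1r // expf_neq0.
Qed.

End CaseA.

Section CaseB.
Variables (k l : nat).
Hypothesis hk : (0 < k)%N.
Hypothesis hl : (0 < l)%N.
Let S := nseq k true ++ nseq l false.

Lemma sizeS : size S = (k + l)%N.
Proof. by rewrite /S size_cat !size_nseq. Qed.

Lemma cntT n : count id (nseq n true) = n.
Proof. by elim: n => //= n ->. Qed.
Lemma cntF n : count id (nseq n false) = 0%N.
Proof. by elim: n. Qed.

Lemma cntF_take i n : count id (take i (nseq n false)) = 0%N.
Proof. elim: n i => [|n IH] [|i] //=; exact: IH. Qed.

Lemma count_takeS j : count id (take j S) = minn j k.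
Proof.
rewrite /S take_cat size_nseq; case: ifP => h.
  rewrite take_nseq ?cntT; lia.
move/negbT: h; rewrite -leqNgt => h.
rewrite count_cat cntT cntF_take; lia.
Qed.

Lemma count_dropS d : count id (drop d S) = (k - d)%N.
Proof.
rewrite /S drop_cat size_nseq; case: ifP => h.
  by rewrite drop_nseq count_cat cntT cntF addn0.
move/negbT: h; rewrite -leqNgt => h.
rewrite drop_nseq cntF; lia.
Qed.

Lemma nosuffix w j : (0 < j)%N -> (j < k + l)%N -> ~~ suffix S (w ++ take j S).
Proof.
move=> j0 jL; apply/negP => /suffixP [s0 hs0].
pose s : seq bool := s0.
have hs : w ++ take j S = s ++ S := hs0.
clearbody s; clear hs0 s0.
have hsz : (size w + j = size (s : seq bool) + (k + l))%N.
  by have := congr1 size hs; rewrite !size_cat size_take sizeS jL !size_nseq.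
have hd := drop_size_cat (take j S) (erefl (size w)).
rewrite hs drop_cat ifN in hd; last by rewrite -leqNgt; lia.
have e : (size w - size (s : seq bool) = k + l - j)%N by lia.
rewrite e in hd.
have := congr1 (count id) hd; rewrite count_takeS count_dropS; lia.
Qed.

Lemma infix_takeS w j : (j < k + l)%N -> infix S (w ++ take j S) = infix S w.
Proof.
elim: j => [|j IH] h; first by rewrite take0 cats0.
have hj : (j < size S)%N by rewrite sizeS; lia.
have e : w ++ take j.+1 S = rcons (w ++ take j S) (nth false S j).
  by rewrite (take_nth false hj) rcons_cat.
rewrite e infix_rconsl -e (negbTE (nosuffix _ _ _)) //= IH //; lia.
Qed.

Lemma keyB w v : size v = (k + l)%N ->
  first_occ_at S (w ++ v) = (v == S) && ~~ infix S w.
Proof.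
move=> hv; rewrite /first_occ_at.
rewrite -[S in suffix S _]cat0s suffix_catl ?sizeS // suffix0s andbT eq_sym.
case: eqP => [->|] //=.
have [L' hL] : exists L', (k + l = L'.+1)%N by exists (k + l).-1; lia.
rewrite size_cat sizeS hL addnS /= take_cat ltnNge leq_addr /= addKn.
by rewrite infix_takeS // hL.
Qed.

Lemma wp_nseq (R : realType) (p : R) b n :
  word_prob p (nseq n b) = (if b then p else 1 - p) ^+ n.
Proof. by elim: n => [|n IH]; rewrite ?expr0 /word_prob ?big_nil //= big_cons -/(word_prob _ _) IH exprS. Qed.

Lemma FB (R : realType) (p : R) m :
  waiting_pmf p S (m + (k + l))%N = Apr p S m * word_prob p S.
Proof.
rewrite /waiting_pmf /Apr big_mkcond mulr_suml [RHS]big_mkcond.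
rewrite (sum_tuple_cat m (k + l) (fun s => if first_occ_at S s then word_prob p s else 0)).
apply: eq_bigr => w _.
under eq_bigr => v _ do rewrite keyB ?size_tuple //.
have hS : size S == (k + l)%N by rewrite sizeS.
rewrite (bigD1 (Tuple hS)) //= eqxx /= big1 ?addr0; last first.
  move=> v hv; rewrite (_ : (tval v == S) = false) //; apply/negbTE.
  by apply: contra hv => /eqP h; apply/eqP/val_inj; rewrite /= h.
by case: (infix S w); rewrite /= ?mul0r // wp_cat.
Qed.

End CaseB.

Lemma moment_Emom (R : realType) (p : R) S n :
  moment_partial p S n = Emom (waiting_pmf p S) n.
Proof. by apply: funext => N; rewrite /Emom big_mkord. Qed.

Lemma wpmf_ge0 (R : realType) (p : R) S m : 0 <= p -> p <= 1 -> 0 <= waiting_pmf p S m.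
Proof. by move=> h0 h1; apply: sumr_ge0 => t _; exact: wp_ge0. Qed.

Lemma Apr_ge0 (R : realType) (p : R) S m : 0 <= p -> p <= 1 -> 0 <= Apr p S m.
Proof. by move=> h0 h1; apply: sumr_ge0 => t _; exact: wp_ge0. Qed.

Local Open Scope classical_set_scope.
Local Open Scope ring_scope.

Theorem corollary4p12 (R : realType) (p : R) (hp0 : 0 < p) (hp1 : p < 1)
  (n : nat) (hn : (1 <= n)%N) :
  (forall k : nat, (1 <= k)%N ->
     moment_partial p (nseq k true) n @ \oo -->
     \sum_(P in set_partitions n)
        (-1) ^+ (n - #|P|) * (#|P|)`!%:R *
        \prod_(B in P) \sum_(1 <= i < k.+1)
            ((i%:R ^+ #|B| - (i.-1)%:R ^+ #|B|) / p ^+ i)) /\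
  (forall k l : nat, (1 <= k)%N -> (1 <= l)%N ->
     moment_partial p (nseq k true ++ nseq l false) n @ \oo -->
     \sum_(P in set_partitions n)
        (-1) ^+ (n - #|P|) * (#|P|)`!%:R *
        \prod_(B in P)
            (((k + l)%:R ^+ #|B| - (k + l).-1%:R ^+ #|B|)
               / (p ^+ k * (1 - p) ^+ l))).
Proof.
have p0 : 0 <= p by apply: ltW.
have p1 : p <= 1 by apply: ltW.
have pn0 : p != 0 by rewrite gt_eqF.
split.
  move=> k hk.
  pose c := fun j : nat => \sum_(1 <= i < k.+1) ((i%:R ^+ j - (i.-1)%:R ^+ j) / p ^+ i).
  rewrite (partsum_gs c n) moment_Emom.
  apply: (@moments_cvg R (waiting_pmf p (nseq k true)) (Apr p (nseq k true)) k
           (fun i => (p ^+ i)^-1) (gs c)).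
  - by move=> m; exact: wpmf_ge0.
  - by move=> m; exact: Apr_ge0.
  - by apply: Apr0; rewrite -size_eq0 size_nseq -lt0n.
  - by move=> m; exact: AprS.
  - by move=> m hm; apply: wpmf_small; rewrite size_nseq.
  - exact: hk.
  - by move=> m; exact: FA_id.
  - exact: gs0.
  - move=> j; rewrite gsS; apply: eq_bigr => i _; congr (_ * (_ * _) * _).
    by rewrite /c; apply: eq_bigr => i' _; rewrite mulrC.
move=> k l hk hl.
pose S := nseq k true ++ nseq l false.
have hwS : word_prob p S = p ^+ k * (1 - p) ^+ l by rewrite wp_cat !wp_nseq.
have hwS0 : word_prob p S != 0.
  rewrite hwS; apply: mulf_neq0; apply: expf_neq0 => //.
  by rewrite subr_eq0 gt_eqF.
pose c := fun j : nat => ((k + l)%:R ^+ j - (k + l).-1%:R ^+ j) / (p ^+ k * (1 - p) ^+ l).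
rewrite (partsum_gs c n) moment_Emom.
apply: (@moments_cvg R (waiting_pmf p S) (Apr p S) (k + l)
         (fun i => if i == (k + l)%N then (word_prob p S)^-1 else 0) (gs c)).
- by move=> m; exact: wpmf_ge0.
- by move=> m; exact: Apr_ge0.
- by apply: Apr0; rewrite -size_eq0 sizeS -lt0n addn_gt0 hk.
- by move=> m; exact: AprS.
- by move=> m hm; apply: wpmf_small; rewrite sizeS.
- by rewrite addn_gt0 hk.
- move=> m; rewrite big_nat_recr /=; last by rewrite addn_gt0 hk.
  rewrite big1_seq ?add0r; last first.
    move=> i /andP[_]; rewrite mem_index_iota => /andP[_ hi].
    by rewrite ifN ?mul0r // neq_ltn hi.
  by rewrite eqxx FB // -/S mulrC -mulrA mulfV ?mulr1.
- exact: gs0.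
- move=> j; rewrite gsS; apply: eq_bigr => i _; congr (_ * (_ * _) * _).
  rewrite big_nat_recr /=; last by rewrite addn_gt0 hk.
  rewrite big1_seq ?add0r; last first.
    move=> i' /andP[_]; rewrite mem_index_iota => /andP[_ hi].
    by rewrite ifN ?mul0r // neq_ltn hi.
  by rewrite eqxx /c hwS mulrC.
Qed.
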